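(* Let $\widehat{F}_3$ be the rainbow triangle (a $3$-coloring of $K_3$ whose three edges have three different colors). Then: (a) For every $\delta>0$ there exists $n_0$ such that every graph $G$ of order $n>n_0$ satisfies $c_{3,\widehat{F}_3}(G)\le 2^{(1+\delta)n^2/2}$. (b) For every $\xi>0$ there exists $n_1$ such that if $G$ is a graph of order $n>n_1$ with $c_{3,\widehat{F}_3}(G)\ge 2^{\binom{n}{2}}$, then $|E(G)|\ge\binom{n}{2}-\xi n^2$.
   Context: A $3$-coloring of a graph assigns one of three colors to each edge (not necessarily properly). $c_{3,\widehat{F}_3}(G)$ denotes the number of $3$-colorings of the edges of $G$ containing no triangle whose three edges have three distinct colors. *)

(* Defs.v *)
From mathcomp Require Import all_boot.
From Stdlib Require Import Reals.
Set Implicit Arguments. Unset Strict Implicit. Unset Printing Implicit Defensive.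

Definition simple_graph (n : nat) (g : rel 'I_n) : Prop :=
  irreflexive g /\ symmetric g.

(* Edges of g, each unordered edge {i,j} represented once as (i,j) with i < j. *)
Definition is_edge (n : nat) (g : rel 'I_n) (p : 'I_n * 'I_n) : bool :=
  (p.1 < p.2) && g p.1 p.2.

Definition edge_t (n : nat) (g : rel 'I_n) : finType :=
  {p : 'I_n * 'I_n | is_edge g p}.

Definition num_edges (n : nat) (g : rel 'I_n) : nat := #|edge_t g|.

Definition coloring (n : nat) (g : rel 'I_n) : finType := {ffun edge_t g -> 'I_3}.

Definition col (n : nat) (g : rel 'I_n) (c : coloring g) (i j : 'I_n) : option 'I_3 :=
  match insub (i, j) with
  | Some x => Some (c x)
  | None => None
  end.

Definition has_rainbow_triangle (n : nat) (g : rel 'I_n) (c : coloring g) : bool :=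
  [exists i : 'I_n, exists j : 'I_n, exists k : 'I_n,
    [&& i < j, j < k, g i j, g j k, g i k &
     match col c i j, col c j k, col c i k with
     | Some a, Some b, Some d => [&& a != b, b != d & a != d]
     | _, _, _ => false
     end]].

Definition c3_rainbow_free (n : nat) (g : rel 'I_n) : nat :=
  #|[set c : coloring g | ~~ has_rainbow_triangle c]|.

(* Main.v *)
Require Import Defs.
From mathcomp Require Import all_boot.
From Stdlib Require Import Reals Lia Lra.
From mathcomp Require Import zify.
Set Implicit Arguments. Unset Strict Implicit. Unset Printing Implicit Defensive.

Definition rb (a b c : 'I_3) := [&& a != b, b != c & a != c].

Lemma rb_cases (a b c : 'I_3) : b != c -> ~~ rb a b c -> (a == b) || (a == c).
Proof.
by case: a => [[|[|[|a]]] Ha] //; case: b => [[|[|[|b]]] Hb] //; case: c => [[|[|[|c]]] Hc].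
Qed.

Lemma I3_eq (a b : 'I_3) : a != ord_max -> b != ord_max -> (a == ord0) = (b == ord0) -> a = b.
Proof.
by case: a => [[|[|[|a]]] Ha] //; case: b => [[|[|[|b]]] Hb] //; move=> *; apply/val_inj.
Qed.

Lemma rb_perm1 a b c : rb a b c = rb b a c.
Proof. by case: a => [[|[|[|a]]] Ha] //; case: b => [[|[|[|b]]] Hb] //; case: c => [[|[|[|c]]] Hc]. Qed.

Lemma rb_perm2 a b c : rb a b c = rb a c b.
Proof. by case: a => [[|[|[|a]]] Ha] //; case: b => [[|[|[|b]]] Hb] //; case: c => [[|[|[|c]]] Hc]. Qed.

Lemma expn_pow a b : expn a b = Nat.pow a b.
Proof. elim: b => [|b IH]; first by []. by rewrite expnS IH /= -multE. Qed.

Lemma INR_expn2 k : INR (expn 2 k) = (2 ^ k)%R.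
Proof. by rewrite expn_pow pow_INR. Qed.

Lemma INR_mul a b : INR (a * b) = (INR a * INR b)%R.
Proof. by rewrite -multE mult_INR. Qed.

Lemma INR_add a b : INR (a + b) = (INR a + INR b)%R.
Proof. by rewrite -plusE plus_INR. Qed.

Lemma INR_le a b : a <= b -> (INR a <= INR b)%R.
Proof. by move/leP; apply: le_INR. Qed.

Section RealPart.
Open Scope R_scope.
Variable rho : R.
Variable L : nat.
Hypothesis rho_pos : 0 < rho.
Hypothesis rho_le1 : rho <= 1.
Hypothesis HrL : 1 - / 2 ^ (L + 1) <= rho ^ L.

Lemma pow_le1 k : rho ^ k <= 1.
Proof. rewrite -(pow1 k); apply: pow_incr; lra. Qed.

Lemma pow_mono p q : (p <= q)%nat -> rho ^ q <= rho ^ p.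
Proof.
move=> pq; rewrite -(subnKC pq) -plusE pow_add.
have := pow_le1 (q - p); have := pow_lt rho p rho_pos; nra.
Qed.

Lemma two_rhoL : 1 <= 2 * rho ^ L.
Proof.
have h : / 2 ^ (L + 1) <= / 2.
  apply: Rinv_le_contravar; first lra.
  rewrite -{1}(pow_1 2); apply: Rle_pow; lra || lia.
lra.
Qed.

Lemma two_rhoL_pow m : 1 <= 2 ^ m * rho ^ (L * m).
Proof.
rewrite -multE pow_mult -Rpow_mult_distr; apply: pow_R1_Rle; exact: two_rhoL.
Qed.

Lemma key a : (2 ^ (a + 1) - 1) * rho ^ a <= 2 ^ (a + 1) * rho ^ L.
Proof.
have Ha := pow_lt rho a rho_pos.
have P2 : 0 < 2 ^ (a + 1) by apply: pow_lt; lra.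
case: (leqP a L) => aL.
  have E : rho ^ L = rho ^ a * rho ^ (L - a) by rewrite -pow_add plusE subnKC.
  rewrite E.
  have h1 : rho ^ L <= rho ^ (L - a) by apply: pow_mono; lia.
  have h2 : 2 ^ (a + 1) <= 2 ^ (L + 1) by apply: Rle_pow; lra || lia.
  have P3 : 0 < 2 ^ (L + 1) by apply: pow_lt; lra.
  have h3 : 2 ^ (a + 1) * / 2 ^ (L + 1) <= 1.
    apply: (Rmult_le_reg_r (2 ^ (L + 1))) => //.
    rewrite Rmult_assoc Rinv_l; lra.
  have h4 : 2 ^ (a + 1) - 1 <= 2 ^ (a + 1) * rho ^ (L - a).
    have : 2 ^ (a + 1) * (1 - / 2 ^ (L + 1)) <= 2 ^ (a + 1) * rho ^ (L - a).
      apply: Rmult_le_compat_l; lra.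
    lra.
  nra.
have h1 : rho ^ a <= rho ^ L by apply: pow_mono; lia.
nra.
Qed.

Lemma combine (F FK FR a r m : nat) : (F <= FK * FR)%nat -> (FK.+1 <= expn 2 a.+1)%nat ->
  INR FR * rho ^ r <= 2 ^ (r + m) * rho ^ (L * m) ->
  INR F * rho ^ (a + r) <= 2 ^ (a + r + m + 1) * rho ^ (L * (m + 1)).
Proof.
move=> H1 H2 H3.
have E1 : INR F <= INR FK * INR FR by rewrite -INR_mul; apply: INR_le.
have E2 : INR FK <= 2 ^ (a + 1) - 1.
  have := INR_le H2; rewrite INR_expn2 S_INR addn1; lra.
have Pa := pow_lt rho a rho_pos.
have Pr := pow_lt rho r rho_pos.
have FR0 := pos_INR FR.
have FK0 := pos_INR FK.
have K := key a.
have E3 : INR F * rho ^ (a + r) <= (INR FK * rho ^ a) * (INR FR * rho ^ r).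
  rewrite pow_add.
  have : INR F * (rho ^ a * rho ^ r) <= INR FK * INR FR * (rho ^ a * rho ^ r).
    apply: Rmult_le_compat_r => //; nra.
  lra.
have E4 : INR FK * rho ^ a <= 2 ^ (a + 1) * rho ^ L.
  apply: Rle_trans K; apply: Rmult_le_compat_r; lra.
have E5 : (INR FK * rho ^ a) * (INR FR * rho ^ r) <= (2 ^ (a + 1) * rho ^ L) * (2 ^ (r + m) * rho ^ (L * m)).
  apply: Rmult_le_compat => //; nra.
have E6 : 2 ^ (a + 1) * rho ^ L * (2 ^ (r + m) * rho ^ (L * m)) = 2 ^ (a + r + m + 1) * rho ^ (L * (m + 1)).
  have -> : (a + r + m + 1 = (a + 1) + (r + m))%nat by lia.
  have -> : (L * (m + 1) = L + L * m)%nat by lia.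
  have e1 : 2 ^ (a + 1 + (r + m)) = 2 ^ (a + 1) * 2 ^ (r + m) := pow_add _ _ _.
  have e2 : rho ^ (L + L * m) = rho ^ L * rho ^ (L * m) := pow_add _ _ _.
  rewrite e1 e2; ring.
lra.
Qed.


Lemma outer_combine (Ccol Cp M Cs s d m e : nat) :
  (Ccol <= Cp * M)%nat -> s = (d + m)%nat ->
  INR M * rho ^ d <= 2 ^ (d + m + 1) * rho ^ (L * (m + 1)) ->
  INR Cp * rho ^ Cs * rho ^ (L * e) <= 2 ^ (Cs + s) * rho ^ (L * (Cs + s)) ->
  INR Ccol * rho ^ (Cs + s) * rho ^ (L * (e + d)) <=
    2 ^ (Cs + s + s.+1) * rho ^ (L * (Cs + s + s.+1)).
Proof.
move=> H1 Hs H2 H3.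
have E1 : INR Ccol <= INR Cp * INR M by rewrite -INR_mul; apply: INR_le.
have e1 : rho ^ (Cs + s) = rho ^ Cs * rho ^ s := pow_add _ _ _.
have e2 : rho ^ (L * e + L * d) = rho ^ (L * e) * rho ^ (L * d) := pow_add _ _ _.
have -> : (L * (e + d) = L * e + L * d)%nat by lia.
have e3 : 2 ^ (Cs + s + (d + m + 1)) = 2 ^ (Cs + s) * 2 ^ (d + m + 1) := pow_add _ _ _.
have e4 : rho ^ (L * (Cs + s) + L * (m + 1) + L * d) =
   rho ^ (L * (Cs + s)) * rho ^ (L * (m + 1)) * rho ^ (L * d).
  by rewrite -!pow_add.
have -> : (Cs + s + s.+1 = Cs + s + (d + m + 1))%nat by lia.
have -> : (L * (Cs + s + (d + m + 1)) = L * (Cs + s) + L * (m + 1) + L * d)%nat by lia.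
rewrite e1 e2 e3 e4.
have hsd : rho ^ s <= rho ^ d by apply: pow_mono; lia.
have P1 := pow_lt rho Cs rho_pos.
have P2 := pow_lt rho s rho_pos.
have P3 := pow_lt rho d rho_pos.
have P4 := pow_lt rho (L * e) rho_pos.
have P5 := pow_lt rho (L * d) rho_pos.
have Q1 := pos_INR Cp.
have Q2 := pos_INR M.
have Q3 := pos_INR Ccol.
set a1 := INR Cp * rho ^ Cs * rho ^ (L * e).
set a2 := INR M * rho ^ d.
have A1 : 0 <= a1 by rewrite /a1; apply: Rmult_le_pos; [apply: Rmult_le_pos|]; lra.
have A2 : 0 <= a2 by rewrite /a2; apply: Rmult_le_pos; lra.
have step1 : INR Ccol * (rho ^ Cs * rho ^ s) * (rho ^ (L * e) * rho ^ (L * d)) <= a1 * a2 * rho ^ (L * d).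
  have : INR Ccol * rho ^ s <= INR Cp * INR M * rho ^ d.
    apply: Rmult_le_compat => //; lra.
  rewrite /a1 /a2 => h.
  have h' : INR Ccol * rho ^ s * (rho ^ Cs * rho ^ (L * e) * rho ^ (L * d)) <=
            INR Cp * INR M * rho ^ d * (rho ^ Cs * rho ^ (L * e) * rho ^ (L * d)).
    apply: Rmult_le_compat_r => //.
    apply: Rmult_le_pos; [apply: Rmult_le_pos|]; lra.
  lra.
have step2 : a1 * a2 * rho ^ (L * d) <=
   2 ^ (Cs + s) * rho ^ (L * (Cs + s)) * (2 ^ (d + m + 1) * rho ^ (L * (m + 1))) * rho ^ (L * d).
  apply: Rmult_le_compat_r; first lra.
  apply: Rmult_le_compat => //.
lra.
Qed.

End RealPart.

Section Core.
Variable n : nat.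
Variable g : rel 'I_n.
Hypothesis gsym : symmetric g.
Hypothesis girr : irreflexive g.
Local Notation T := 'I_n.

Definition FF (c : T -> T -> 'I_3) (N : {set T}) : {set {ffun T -> 'I_3}} :=
  [set f : {ffun T -> 'I_3} | [forall u, (u \notin N) ==> (f u == ord0)] &&
           [forall u, forall w, [&& u \in N, w \in N & g u w] ==> ~~ rb (f u) (f w) (c u w)]].

Lemma FFP c (N : {set T}) (f : {ffun T -> 'I_3}) : reflect ((forall u, u \notin N -> f u = ord0) /\
   (forall u w, u \in N -> w \in N -> g u w -> ~~ rb (f u) (f w) (c u w))) (f \in FF c N).
Proof.
rewrite inE; apply: (iffP andP) => [[/forallP H1 /forallP H2]|[H1 H2]]; split.
- by move=> u Hu; apply/eqP; move/implyP: (H1 u); apply.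
- by move=> u w Hu Hw Hg; move/forallP: (H2 u) => /(_ w) /implyP; apply; rewrite Hu Hw Hg.
- by apply/forallP => u; apply/implyP => Hu; rewrite H1.
- by apply/forallP => u; apply/forallP => w; apply/implyP => /and3P [Hu Hw Hg]; apply: H2.
Qed.

Definition rs (A : {set T}) (f : {ffun T -> 'I_3}) : {ffun T -> 'I_3} :=
  [ffun u => if u \in A then f u else ord0].

Lemma rs_FF c (N A : {set T}) f : A \subset N -> f \in FF c N -> rs A f \in FF c A.
Proof.
move=> sAN /FFP [H1 H2]; apply/FFP; split=> [u Hu|u w Hu Hw Hg]; rewrite !ffunE ?(negbTE Hu) //.
by rewrite Hu Hw; apply: H2 => //; apply: (subsetP sAN).
Qed.

Lemma FF_prod c (N A : {set T}) : A \subset N -> #|FF c N| <= #|FF c A| * #|FF c (N :\: A)|.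
Proof.
move=> sAN.
have inj : {in FF c N &, injective (fun f => (rs A f, rs (N :\: A) f))}.
  move=> f1 f2 /FFP [H1 _] /FFP [H2 _] [E1 E2]; apply/ffunP => u.
  case: (boolP (u \in A)) => uA.
    by move/ffunP: E1 => /(_ u); rewrite !ffunE uA.
  case: (boolP (u \in N)) => uN; last by rewrite H1 ?H2.
  by move/ffunP: E2 => /(_ u); rewrite !ffunE !inE uA uN.
rewrite -cardsX -(card_in_imset inj); apply: subset_leq_card.
apply/subsetP => p /imsetP [f Hf ->]; rewrite inE /=; apply/andP; split.
  exact: rs_FF Hf.
apply: rs_FF Hf; by apply/subsetP => u; rewrite inE => /andP [].
Qed.

Lemma FF0 c : #|FF c set0| <= 1.
Proof.
have sub : FF c set0 \subset [set [ffun => ord0 : 'I_3]].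
  apply/subsetP => f /FFP [H _].
  by rewrite inE; apply/eqP/ffunP => u; rewrite ffunE H ?inE.
by rewrite (leq_trans (subset_leq_card sub)) // cards1.
Qed.


Definition clique (K : {set T}) := forall x y, x \in K -> y \in K -> x != y -> g x y.

Lemma FF_dec c (K : {set T}) x f : f \in FF c K ->
  f = [ffun u => if u == x then f x else rs (K :\ x) f u].
Proof.
move=> /FFP [H1 _]; apply/ffunP => u; rewrite !ffunE.
case: (u =P x) => [-> //|/eqP ux]; rewrite !inE ux /=.
by case: (boolP (u \in K)) => // uK; rewrite H1.
Qed.

Lemma FF_clique c : forall k (K : {set T}), #|K| = k -> clique K -> #|FF c K| < expn 2 k.+1.
Proof.
elim=> [|k IH] K HK Hcl.
  move/eqP: HK; rewrite cards_eq0 => /eqP ->.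
  by apply: leq_ltn_trans (FF0 c) _.
have : 0 < #|K| by rewrite HK.
case/card_gt0P => x xK.
set K' := K :\ x.
have HK' : #|K'| = k by move: HK; rewrite (cardsD1 x K) xK add1n => -[].
have Hcl' : clique K' by move=> u w; rewrite !inE => /andP [_ uK] /andP [_ wK]; apply: Hcl.
have IH' := IH K' HK' Hcl'.
pose o (f0 : {ffun T -> 'I_3}) := [pick u in K' | f0 u != c x u].
pose cd (f : {ffun T -> 'I_3}) : option ({ffun T -> 'I_3} * bool) :=
  if o (rs K' f) is Some u then Some (rs K' f, f x == rs K' f u)
  else if f x == ord_max then None else Some (rs K' f, f x == ord0).
have Hx f : f \in FF c K -> forall u, u \in K' -> f u = rs K' f u.
  by move=> _ u uK; rewrite ffunE uK.
have NP f0 : o f0 = None -> forall u, u \in K' -> f0 u = c x u.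
  rewrite /o; case: pickP => // N _ u uK.
  by move/negbT: (N u); rewrite uK /= negbK => /eqP.
have SP f0 u : o f0 = Some u -> (u \in K') && (f0 u != c x u).
  by rewrite /o; case: pickP => // v H [<-].
have inj : {in FF c K &, injective cd}.
  move=> f1 f2 F1 F2 E.
  have E0 : rs K' f1 = rs K' f2.
    move: E; rewrite /cd.
    case O1: (o (rs K' f1)) => [u1|]; case O2: (o (rs K' f2)) => [u2|];
      try (by case=> ->); try (by case: (_ == ord_max) => // -[] ->);
      try (by case: (f1 x == ord_max) => //; case: (f2 x == ord_max) => // -[] ->).
    move=> _; apply/ffunP => u; rewrite !ffunE; case: (boolP (u \in K')) => // uK.
    by move: (NP _ O1 u uK) (NP _ O2 u uK); rewrite !ffunE uK => -> ->.
  rewrite (FF_dec x F1) (FF_dec x F2) -E0; apply/ffunP => u; rewrite !ffunE.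
  case: (u == x) => //; clear u.
  move: E; rewrite /cd -E0.
  case O1: (o (rs K' f1)) => [u|].
    move/SP/andP: O1 => [uK Hne] [Eb].
    have uK0 : u \in K by move: uK; rewrite inE => /andP [].
    have xu : x != u by move: uK; rewrite !inE eq_sym => /andP [->].
    have G : forall f, f \in FF c K -> rs K' f = rs K' f1 -> (f x == rs K' f1 u) || (f x == c x u).
      move=> f Ff Ef; apply: rb_cases => //.
      rewrite -Ef -(Hx f Ff u uK); move/FFP: Ff => [_ H2].
      exact: H2 xK uK0 (Hcl x u xK uK0 xu).
    have G1 := G f1 F1 erefl; have G2 := G f2 F2 (esym E0).
    move: G1 G2 Eb.
    case: (f1 x =P rs K' f1 u) => [->|_]; case: (f2 x =P rs K' f1 u) => [->|_] //=.
    by move=> /eqP -> /eqP ->.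
  case: (f1 x =P ord_max) => [->|/eqP H1]; case: (f2 x =P ord_max) => [->|/eqP H2] //= [Eb].
  exact: I3_eq.
have sub : cd @: FF c K \subset [set Some p | p in setX (FF c K') [set: bool]] :|: [set None].
  apply/subsetP => _ /imsetP [f Ff ->]; rewrite /cd.
  have Hr : rs K' f \in FF c K' by apply: rs_FF Ff; apply/subsetP => u; rewrite inE => /andP [].
  case: (o _) => [u|]; last case: (_ == ord_max).
  - by apply/setUP; left; apply/imsetP; exists (rs K' f, f x == rs K' f u); rewrite // in_setX Hr in_setT.
  - by rewrite !inE eqxx orbT.
  - by apply/setUP; left; apply/imsetP; exists (rs K' f, f x == ord0); rewrite // in_setX Hr in_setT.
have H1 := subset_leq_card sub.
rewrite (card_in_imset inj) in H1.
have H2 := cardsUI [set Some p | p in setX (FF c K') [set: bool]] [set None].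
rewrite card_imset in H2; last by move=> p q [].
rewrite cardsX cardsT card_bool cards1 in H2.
rewrite (expnS 2 k.+1); move: H1 H2 IH'.
move: #|FF c K| #|FF c K'| (expn 2 k.+1) #|_ :|: _| #|_ :&: _| => a b e u v; lia.
Qed.


Definition Nd (N : {set T}) m := forall u, u \in N -> #|[set w in N | (w != u) && ~~ g u w]| <= m.

Lemma max_clique (N : {set T}) x : x \in N -> exists K : {set T},
  [/\ K \subset N, 0 < #|K|, clique K & forall u, u \in N :\: K -> exists2 w, w \in K & ~~ g u w].
Proof.
move=> xN.
pose P (K : {set T}) := (K \subset N) && [forall y in K, forall z in K, (y != z) ==> g y z].
have P1 : P [set x].
  rewrite /P sub1set xN /=; apply/forall_inP => y; rewrite inE => /eqP ->.
  by apply/forall_inP => z; rewrite inE => /eqP ->; rewrite eqxx.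
case: (@arg_maxnP _ [set x] P (fun K => #|K|) P1) => K /andP [sKN /forall_inP clK] Kmax.
have clK' : clique K by move=> y z yK zK yz; move/forall_inP: (clK y yK) => /(_ z zK) /implyP; apply.
exists K; split => //.
  by have := Kmax _ P1; rewrite cards1.
move=> u; rewrite inE => /andP [uK uN].
case: (boolP [exists w in K, ~~ g u w]) => [/exists_inP [w wK Hw]|]; first by exists w.
rewrite negb_exists_in => /forall_inP Hu; exfalso.
have Hu' : forall w, w \in K -> g u w by move=> w wK; move: (Hu w wK); rewrite negbK.
have PuK : P (u |: K).
  rewrite /P subUset sub1set uN sKN /=; apply/forall_inP => y; rewrite !inE => /orP [/eqP ->|yK];
    apply/forall_inP => z; rewrite !inE => /orP [/eqP ->|zK]; apply/implyP => yz.
  - by rewrite eqxx in yz.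
  - exact: Hu'.
  - by rewrite gsym; apply: Hu'.
  - exact: clK'.
have := Kmax _ PuK; rewrite cardsU1 uK /=; lia.
Qed.

Lemma Nd_rem (N K : {set T}) m : K \subset N ->
  (forall u, u \in N :\: K -> exists2 w, w \in K & ~~ g u w) -> Nd N m ->
  forall u, u \in N :\: K -> #|[set w in N :\: K | (w != u) && ~~ g u w]| < m.
Proof.
move=> sKN Hmax HN u uR; have [w wK nw] := Hmax u uR.
have uN : u \in N by move: uR; rewrite inE => /andP [].
have uK : u \notin K by move: uR; rewrite inE => /andP [].
apply: leq_trans (HN u uN); apply: proper_card; apply/properP; split.
  apply/subsetP => y; rewrite !inE => /andP [/andP [_ yN] H]; by rewrite yN H.
exists w.
  rewrite inE (subsetP sKN w wK) nw andbT /=.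
  by apply/eqP => E; rewrite -E wK in uK.
by rewrite inE inE wK.
Qed.


Definition inE2 (S : {set T}) (p : T * T) := [&& p.1 < p.2, g p.1 p.2, p.1 \in S & p.2 \in S].
Definition hc (h : {ffun T * T -> 'I_3}) (x y : T) := if x < y then h (x, y) else h (y, x).
Definition rfree (S : {set T}) (h : {ffun T * T -> 'I_3}) :=
  [forall x, forall y, forall z, [&& x \in S, y \in S, z \in S, g x y, g y z & g x z] ==>
     ~~ rb (hc h x y) (hc h y z) (hc h x z)].
Definition Col (S : {set T}) : {set {ffun T * T -> 'I_3}} :=
  [set h : {ffun T * T -> 'I_3} | [forall p, ~~ inE2 S p ==> (h p == ord0)] && rfree S h].

Lemma ColP (S : {set T}) (h : {ffun T * T -> 'I_3}) :
  reflect ((forall p, ~~ inE2 S p -> h p = ord0) /\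
    (forall x y z, x \in S -> y \in S -> z \in S -> g x y -> g y z -> g x z ->
        ~~ rb (hc h x y) (hc h y z) (hc h x z))) (h \in Col S).
Proof.
rewrite inE; apply: (iffP andP) => [[/forallP H1 /forallP H2]|[H1 H2]]; split.
- by move=> p Hp; apply/eqP; move/implyP: (H1 p); apply.
- move=> x y z Hx Hy Hz Hxy Hyz Hxz; move/forallP: (H2 x) => /(_ y) /forallP /(_ z) /implyP; apply.
  by rewrite Hx Hy Hz Hxy Hyz Hxz.
- by apply/forallP => p; apply/implyP => Hp; rewrite H1.
- apply/forallP => x; apply/forallP => y; apply/forallP => z; apply/implyP.
  by move=> /and3P [? ? /and4P [? ? ? ?]]; apply: H2.
Qed.

Definition restr (S : {set T}) (h : {ffun T * T -> 'I_3}) : {ffun T * T -> 'I_3} :=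
  [ffun p => if inE2 S p then h p else ord0].

Lemma hc_restr (S : {set T}) h u w : u \in S -> w \in S -> g u w -> hc (restr S h) u w = hc h u w.
Proof.
move=> uS wS guw; rewrite /hc !ffunE /inE2 /=.
have gwu : g w u by rewrite gsym.
case: (ltngtP u w) => H; rewrite /= ?uS ?wS ?guw ?gwu //.
by move: guw; rewrite (val_inj H) girr.
Qed.

Lemma restr_Col (S : {set T}) v h : h \in Col S -> restr (S :\ v) h \in Col (S :\ v).
Proof.
have sub x : x \in S :\ v -> x \in S by rewrite !inE => /andP [].
move=> /ColP [H1 H2]; apply/ColP; split.
- by move=> p Hp; rewrite ffunE (negbTE Hp).
- move=> x y z xS yS zS gxy gyz gxz; rewrite !hc_restr //.
  by apply: H2 => //; apply: sub.
Qed.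

Definition star (N : {set T}) v (h : {ffun T * T -> 'I_3}) : {ffun T -> 'I_3} :=
  [ffun u => if u \in N then hc h v u else ord0].

Lemma star_FF (S : {set T}) v h : v \in S -> h \in Col S ->
  star [set w in S | g v w] v h \in FF (hc (restr (S :\ v) h)) [set w in S | g v w].
Proof.
move=> vS /ColP [H1 H2]; apply/FFP; split.
- by move=> u uN; rewrite ffunE (negbTE uN).
- move=> u w uN wN guw; rewrite !ffunE uN wN.
  move: uN wN; rewrite !inE => /andP [uS gvu] /andP [wS gvw].
  have uv : u != v by apply/eqP => E; rewrite E girr in gvu.
  have wv : w != v by apply/eqP => E; rewrite E girr in gvw.
  rewrite hc_restr ?inE ?uv ?wv ?uS ?wS //.
  rewrite rb_perm2; exact: H2.
Qed.

Lemma Col_inj (S : {set T}) v h1 h2 : v \in S -> h1 \in Col S -> h2 \in Col S ->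
  restr (S :\ v) h1 = restr (S :\ v) h2 ->
  star [set w in S | g v w] v h1 = star [set w in S | g v w] v h2 -> h1 = h2.
Proof.
move=> vS /ColP [A1 _] /ColP [A2 _] Er Es; apply/ffunP => -[a b].
case: (boolP (inE2 S (a, b))) => H; last by rewrite A1 ?A2.
move: (H); rewrite /inE2 /= => /and4P [].
case: (a =P v) => [->|/eqP av] ab gab aS bS.
  by move/ffunP: Es => /(_ b); rewrite !ffunE inE bS gab /hc ab.
case: (b =P v) => [Eb|/eqP bv].
  rewrite Eb in ab gab bS H *.
  by move/ffunP: Es => /(_ a); rewrite !ffunE inE aS (gsym v a) gab /hc ltnNge (ltnW ab).
by move/ffunP: Er => /(_ (a, b)); rewrite !ffunE /inE2 /= !inE ab gab aS bS av bv.
Qed.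

Lemma Col_step (S : {set T}) v : v \in S ->
  #|Col S| <= \sum_(h' in Col (S :\ v)) #|FF (hc h') [set w in S | g v w]|.
Proof.
move=> vS; rewrite -sum1_card.
rewrite (partition_big (restr (S :\ v)) (fun h' => h' \in Col (S :\ v))) /=; last first.
  by move=> h /restr_Col.
apply: leq_sum => h' Hh'.
rewrite sum1dep_card.
set A := [set h | _].
have memA h : h \in A = (h \in Col S) && (restr (S :\ v) h == h') by rewrite /A in_set.
have inj : {in A &, injective (star [set w in S | g v w] v)}.
  move=> h1 h2; rewrite !memA => /andP [C1 /eqP E1] /andP [C2 /eqP E2] Es.
  by apply: (Col_inj vS C1 C2) => //; rewrite E1 E2.
rewrite -(card_in_imset inj); apply: subset_leq_card; apply/subsetP => _ /imsetP [h Hh ->].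
move: Hh; rewrite memA => /andP [C /eqP <-]; exact: star_FF.
Qed.

Definition nd (S : {set T}) v := #|[set w in S | (w != v) && ~~ g v w]|.

Lemma card_split (S : {set T}) v : v \in S -> #|S| = (#|[set w in S | g v w]| + nd S v).+1.
Proof.
move=> vS; rewrite (cardsD1 v S) vS add1n; congr _.+1.
rewrite -(cardsID [set w | g v w] (S :\ v)); congr addn; apply: eq_card => w; rewrite !inE.
  by case: (w =P v) => [->|_]; rewrite /= ?girr ?andbF //.
by case: (w \in S); case: (w != v); case: (g v w).
Qed.

Definition ed (S : {set T}) := #|[set p | inE2 S p]|.

Lemma ed_split (S : {set T}) v : v \in S -> ed S = ed (S :\ v) + #|[set w in S | g v w]|.
Proof.
move=> vS; rewrite /ed -(cardsID [set p : T * T | (p.1 == v) || (p.2 == v)] [set p | inE2 S p]) addnC.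
congr addn.
  apply: eq_card => -[a b]; rewrite !inE /inE2 /= !inE.
  by case: (a == v); case: (b == v); rewrite ?andbF.
pose q (p : T * T) := if p.1 == v then p.2 else p.1.
pose e (w : T) := if v < w then (v, w) else (w, v).
have qe : {in [set w in S | g v w], cancel e q}.
  move=> w; rewrite inE => /andP [_ gvw].
  have wv : w != v by apply/eqP => E; rewrite E girr in gvw.
  by rewrite /e /q; case: (v < w); rewrite /= ?eqxx // (negbTE wv).
rewrite -(card_in_imset (can_in_inj qe)); apply: eq_card => -[a b].
rewrite !inE /inE2 /=; apply/idP/imsetP.
  move=> /andP [/and4P [ab gab aS bS] /orP [/eqP Ea|/eqP Eb]].
    by exists b; rewrite ?inE ?bS -?Ea ?gab // /e -Ea ab.
  exists a; first by rewrite inE aS -Eb gsym gab.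
  by rewrite /e -Eb ltnNge (ltnW ab).
move=> [w]; rewrite inE => /andP [wS gvw]; rewrite /e.
have wv : w != v by apply/eqP => E; rewrite E girr in gvw.
case: (ltngtP v w) => H [-> ->] /=; rewrite ?H ?gvw ?vS ?wS ?eqxx ?orbT //.
- by rewrite gsym gvw.
- by move: wv; rewrite (val_inj H) eqxx.
Qed.

Lemma Col0 : #|Col set0| <= 1.
Proof.
have sub : Col set0 \subset [set [ffun => ord0 : 'I_3]].
  apply/subsetP => h /ColP [H _].
  by rewrite inE; apply/eqP/ffunP => p; rewrite ffunE H // /inE2 !inE !andbF.
by rewrite (leq_trans (subset_leq_card sub)) // cards1.
Qed.

Section Bound.
Variable rho : R.
Variable L : nat.
Hypothesis rho_pos : (0 < rho)%R.
Hypothesis rho_le1 : (rho <= 1)%R.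
Hypothesis HrL : (1 - / 2 ^ (L + 1) <= rho ^ L)%R.

Lemma FF_bound c m : forall N : {set T}, Nd N m ->
  (INR #|FF c N| * rho ^ #|N| <= 2 ^ (#|N| + m + 1) * rho ^ (L * (m + 1)))%R.
Proof.
have Hemp m0 : (INR #|FF c set0| * rho ^ #|@set0 T| <= 2 ^ (#|@set0 T| + m0) * rho ^ (L * m0))%R.
  rewrite cards0 add0n /=.
  have := INR_le (FF0 c); have := two_rhoL_pow HrL m0; simpl; lra.
have Hb m0 : (INR #|FF c set0| * rho ^ #|@set0 T| <= 2 ^ (#|@set0 T| + m0 + 1) * rho ^ (L * (m0 + 1)))%R.
  by have := Hemp (m0 + 1)%nat; rewrite !cards0 !add0n.
elim: m => [|m IH] N HN; (case: (set_0Vmem N) => [->|[x xN]]; [exact: Hb|]);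
  have [K [sKN K0 clK Hmax]] := max_clique xN; have Hlt := Nd_rem sKN Hmax HN;
  have EN : #|N| = (#|K| + #|N :\: K|)%nat by rewrite -(cardsID K N) (setIidPr sKN).
- have HR : (INR #|FF c (N :\: K)| * rho ^ #|N :\: K| <= 2 ^ (#|N :\: K| + 0) * rho ^ (L * 0))%R.
    case: (set_0Vmem (N :\: K)) => [->|[u uR]]; first exact: Hemp.
    by have := Hlt u uR.
  rewrite EN; apply: (combine rho_pos rho_le1 HrL (FF_prod c sKN) (FF_clique c erefl clK) HR).
- have HR : (INR #|FF c (N :\: K)| * rho ^ #|N :\: K| <= 2 ^ (#|N :\: K| + m.+1) * rho ^ (L * m.+1))%R.
    case: (set_0Vmem (N :\: K)) => [->|[u uR]]; first exact: Hemp.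
    have := IH (N :\: K) (fun u uR => Hlt u uR).
    have -> : (#|N :\: K| + m + 1 = #|N :\: K| + m.+1)%nat by lia.
    by have -> : (L * (m + 1) = L * m.+1)%nat by lia.
  rewrite EN; apply: (combine rho_pos rho_le1 HrL (FF_prod c sKN) (FF_clique c erefl clK) HR).
Qed.


Lemma Col_bound s : forall S : {set T}, #|S| = s ->
  (INR #|Col S| * rho ^ 'C(s, 2) * rho ^ (L * ed S) <=
     2 ^ 'C(s.+1, 2) * rho ^ (L * ('C(s, 2) + s)))%R.
Proof.
elim: s => [|s IH] S HS.
  move/eqP: HS; rewrite cards_eq0 => /eqP ->.
  have E : ed set0 = 0.
    apply/eqP; rewrite cards_eq0; apply/eqP/setP => p; rewrite !inE /inE2 !inE.
    by rewrite !andbF.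
  rewrite E bin0n bin_small //=.
  have := INR_le Col0; rewrite addn0 muln0 /=; lra.
have : 0 < #|S| by rewrite HS.
case/card_gt0P => v0 v0S.
case: (@arg_maxnP _ v0 (fun v => v \in S) (nd S) v0S) => v vS vmax.
set N := [set w in S | g v w].
have HS' : #|S :\ v| = s by move: HS; rewrite (cardsD1 v S) vS add1n => -[].
have IH' := IH _ HS'.
have Hsplit := card_split vS.
have Hed := ed_split vS.
have HNd : Nd N (nd S v).
  move=> u; rewrite inE => /andP [uS gvu]; apply: leq_trans (vmax u uS).
  apply: subset_leq_card; apply/subsetP => w; rewrite !inE => /andP [/andP [wS _] H].
  by rewrite wS H.
have Hst := Col_step vS.
have B1 : 'C(s.+1, 2) = ('C(s, 2) + s)%nat by rewrite binS bin1.
have B2 : 'C(s.+2, 2) = ('C(s, 2) + s + s.+1)%nat by rewrite binS bin1 B1.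
rewrite B1 in IH'.
rewrite B2 B1 Hed.
case: (posnP #|Col (S :\ v)|) => [C0|Cpos].
  have : #|Col S| = 0.
    apply/eqP; rewrite -leqn0; apply: leq_trans Hst _.
    by move/eqP: C0; rewrite cards_eq0 => /eqP ->; rewrite big_set0.
  move=> ->; rewrite /=.
  have P1 := pow_lt 2 ('C(s, 2) + s + s.+1) (ltac:(lra) : (0 < 2)%R).
  have P2 := pow_lt rho (L * ('C(s, 2) + s + s.+1)) rho_pos.
  rewrite /= !Rmult_0_l; apply: Rmult_le_pos; lra.
have [h0 h0C Emax] := eq_bigmax_cond (fun h' => #|FF (hc h') N|) Cpos.
have Hsum : #|Col S| <= #|Col (S :\ v)| * #|FF (hc h0) N|.
  apply: leq_trans Hst _; rewrite -sum_nat_const; apply: leq_sum => h' Hh'.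
  by rewrite -Emax; apply: (leq_bigmax_cond h').
apply: (outer_combine rho_pos rho_le1 Hsum _ (FF_bound (hc h0) HNd) IH').
by move: HS; rewrite Hsplit => -[].
Qed.

End Bound.

Lemma sort_rfree (h : {ffun T * T -> 'I_3}) :
  (forall i j k : T, i < j -> j < k -> g i j -> g j k -> g i k -> ~~ rb (h (i, j)) (h (j, k)) (h (i, k))) ->
  forall x y z, g x y -> g y z -> g x z -> ~~ rb (hc h x y) (hc h y z) (hc h x z).
Proof.
move=> H x y z gxy gyz gxz.
have gyx : g y x by rewrite gsym.
have gzy : g z y by rewrite gsym.
have gzx : g z x by rewrite gsym.
rewrite /hc.
case: (ltngtP x y) => xy; [| |by move: gxy; rewrite (val_inj xy) girr];
case: (ltngtP y z) => yz; try (by move: gyz; rewrite (val_inj yz) girr);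
case: (ltngtP x z) => xz; try (by move: gxz; rewrite (val_inj xz) girr);
try (exfalso; lia);
first [ by apply: H
      | by rewrite rb_perm1; apply: H
      | by rewrite rb_perm2; apply: H
      | by rewrite rb_perm1 rb_perm2; apply: H
      | by rewrite rb_perm2 rb_perm1; apply: H
      | by rewrite rb_perm1 rb_perm2 rb_perm1; apply: H ].
Qed.

Definition emb (c : coloring g) : {ffun T * T -> 'I_3} :=
  [ffun p => if (insub p : option (edge_t g)) is Some x then c x else ord0].

Lemma emb_val (c : coloring g) (x : edge_t g) : emb c (val x) = c x.
Proof. by rewrite ffunE valK. Qed.

Lemma col_emb (c : coloring g) (i j : T) : is_edge g (i, j) -> col c i j = Some (emb c (i, j)).
Proof. by move=> H; rewrite /col ffunE (insubT _ H). Qed.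

Lemma c3_le_Col : c3_rainbow_free g <= #|Col setT|.
Proof.
rewrite /c3_rainbow_free.
have inj : injective emb.
  move=> c1 c2 E; apply/ffunP => x; by rewrite -!emb_val E.
rewrite -(card_imset _ inj); apply: subset_leq_card; apply/subsetP => _ /imsetP [c Hc ->].
move: Hc; rewrite inE => Hc.
apply/ColP; split.
  move=> p Hp; rewrite ffunE insubN //.
  by move: Hp; rewrite /inE2 /is_edge !inE !andbT.
move=> x y z _ _ _; apply: sort_rfree => i j k ij jk gij gjk gik.
have eij : is_edge g (i, j) by rewrite /is_edge /= ij gij.
have ejk : is_edge g (j, k) by rewrite /is_edge /= jk gjk.
have eik : is_edge g (i, k) by rewrite /is_edge /= (ltn_trans ij jk) gik.
apply/negP => Hr; move/negP: Hc; apply.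
apply/existsP; exists i; apply/existsP; exists j; apply/existsP; exists k.
by rewrite ij jk gij gjk gik (col_emb c eij) (col_emb c ejk) (col_emb c eik).
Qed.

Lemma ed_T : ed setT = num_edges g.
Proof.
rewrite /num_edges /edge_t card_sig /ed; apply: eq_card => p.
by rewrite !inE /inE2 !inE !andbT.
Qed.

End Core.

Lemma bin2_double k : ('C(k.+1, 2) * 2 = k.+1 * k)%nat.
Proof.
elim: k => [|k IH]; first by [].
rewrite binS bin1 mulnDl IH; lia.
Qed.

Lemma bernoulli (x : R) k : (0 <= x <= 1)%R -> (1 - INR k * x <= (1 - x) ^ k)%R.
Proof.
move=> Hx; elim: k => [|k IH]; first by rewrite /=; lra.
rewrite S_INR /=.
have : (0 <= 1 - x)%R by lra.
move=> h; have := Rmult_le_compat_l _ _ _ h IH.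
have : (0 <= INR k * x * x)%R by apply: Rmult_le_pos; [apply: Rmult_le_pos; [apply: pos_INR|lra]|lra].
nra.
Qed.

Theorem theorem4p4 :
  (forall delta : R, (0 < delta)%R ->
     exists n0 : nat, forall (n : nat) (g : rel 'I_n),
       simple_graph g -> (n0 < n)%nat ->
       (INR (c3_rainbow_free g) <=
          Rpower 2 ((1 + delta) * INR n ^ 2 / 2))%R)
  /\
  (forall xi : R, (0 < xi)%R ->
     exists n1 : nat, forall (n : nat) (g : rel 'I_n),
       simple_graph g -> (n1 < n)%nat ->
       (2 ^ 'C(n, 2) <= c3_rainbow_free g)%nat ->
       (INR 'C(n, 2) - xi * INR n ^ 2 <= INR (num_edges g))%R).
Proof.
split.
- move=> delta Hd.
  have [N HN] := INR_unbounded (/ delta).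
  exists N => n g [girr gsym] Hn.
  have HrL0 : (1 - / 2 ^ (0 + 1) <= 1 ^ 0)%R by rewrite /=; lra.
  have HC := Col_bound gsym girr Rlt_0_1 (Rle_refl 1) HrL0 (erefl #|[set: 'I_n]|).
  rewrite cardsT card_ord !pow1 !Rmult_1_r in HC.
  have H1 := INR_le (c3_le_Col gsym girr).
  have H2 : (INR (c3_rainbow_free g) <= Rpower 2 (INR 'C(n.+1, 2)))%R.
    by rewrite Rpower_pow; lra.
  apply: (Rle_trans _ _ _ H2); apply: Rle_Rpower; first lra.
  have E := bin2_double n.
  have E' : (INR 'C(n.+1, 2) * 2 = INR n.+1 * INR n)%R by rewrite -INR_mul -E INR_mul.
  rewrite S_INR in E'.
  have Hn' : (INR N < INR n)%R by apply: lt_INR; apply/ltP.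
  have Hpos : (0 < INR n)%R by have := pos_INR N; lra.
  have : (1 < delta * INR n)%R.
    have := Rinv_r delta (Rgt_not_eq _ _ Hd).
    have : (/ delta < INR n)%R by lra.
    nra.
  move=> Hdn; nra.
- move=> xi Hxi.
  have [L HL] := INR_unbounded (/ xi).
  have HLx : (1 < INR L * xi)%R.
    have := Rinv_l xi (Rgt_not_eq _ _ Hxi); nra.
  have Lpos : (0 < INR L)%R by have := Rinv_0_lt_compat _ Hxi; lra.
  have L1 : (1 <= INR L)%R.
    have h0 : (0 < L)%coq_nat by apply: INR_lt; rewrite /=; lra.
    exact: (le_INR 1 L h0).
  have P2 : (0 < 2 ^ (L + 1))%R by apply: pow_lt; lra.
  have Q : (0 < INR L * 2 ^ (L + 1))%R by apply: Rmult_lt_0_compat.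
  have Q1 : (1 <= INR L * 2 ^ (L + 1))%R.
    have := L1.
    have : (1 <= 2 ^ (L + 1))%R by apply: pow_R1_Rle; lra.
    nra.
  set x := (/ (INR L * 2 ^ (L + 1)))%R.
  have x0 : (0 < x)%R by apply: Rinv_0_lt_compat.
  have x1 : (x <= 1)%R by rewrite /x -Rinv_1; apply: Rinv_le_contravar; lra.
  set rho := (1 - x)%R.
  have Hx2 : (INR L * x = / 2 ^ (L + 1))%R.
    rewrite /x Rinv_mult -Rmult_assoc Rinv_r ?Rmult_1_l //; apply: Rgt_not_eq; lra.
  have HrL : (1 - / 2 ^ (L + 1) <= rho ^ L)%R.
    rewrite -Hx2; apply: bernoulli; lra.
  have rpos : (0 < rho)%R.
    have : (x < 1)%R.
      rewrite /x -Rinv_1; apply: Rinv_lt_contravar; first lra.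
      have : (1 < 2 ^ (L + 1))%R.
        have : (2 <= 2 ^ (L + 1))%R by rewrite -{1}(pow_1 2); apply: Rle_pow; lra || lia.
        lra.
      have := L1; nra.
    rewrite /rho; lra.
  have rle1 : (rho <= 1)%R by rewrite /rho; lra.
  have rlt1 : (Rabs rho < 1)%R by rewrite Rabs_right; rewrite /rho; lra.
  have [H0 HH0] := pow_lt_1_zero rho rlt1 (/ 2) (ltac:(lra)).
  set h := H0.+1.
  have Hh : (rho ^ h < / 2)%R.
    have := HH0 h (ltac:(apply/leP; rewrite /h; lia)).
    by rewrite Rabs_right //; apply: Rle_ge; apply: pow_le; lra.
  exists (2 * h)%nat => n g [girr gsym] Hn Hc.
  apply: Rnot_lt_le => Hlt.
  set C := 'C(n, 2).
  set e := num_edges g.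
  have HC := Col_bound gsym girr rpos rle1 HrL (erefl #|[set: 'I_n]|).
  rewrite cardsT card_ord ed_T -/C -/e in HC.
  have H1 := INR_le (c3_le_Col gsym girr).
  have H2 : (2 ^ C <= INR (c3_rainbow_free g))%R.
    have h1 : (INR (2 ^ C) <= INR (c3_rainbow_free g))%R by apply: le_INR; apply/leP.
    rewrite pow_INR in h1; have -> : (2 = INR 2)%R by rewrite /=; lra.
    exact: h1.
  have Hnn : (n * n + L * e < L * C)%nat.
    have : (INR (n * n) < INR L * INR C - INR L * INR e)%R.
      rewrite INR_mul.
      have : (xi * (INR n * INR n) < INR C - INR e)%R.
        by move: Hlt; rewrite -/C -/e /= Rmult_1_r; lra.
      move=> h1.
      have h2 : (INR L * (xi * (INR n * INR n)) < INR L * (INR C - INR e))%R.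
        by apply: Rmult_lt_compat_l.
      have h3 : (0 <= INR n * INR n)%R by apply: Rmult_le_pos; apply: pos_INR.
      nra.
    rewrite -!INR_mul => h1.
    have : (INR (n * n + L * e) < INR (L * C))%R by rewrite INR_add; lra.
    by move/INR_lt/ltP.
  have HC2 : (C * 2 <= n * n)%nat.
    rewrite /C; case: (n) => [|m]; first by [].
    rewrite bin2_double; nia.
  have Hnh : (n * h * 2 <= n * n)%nat by nia.
  have Hk : (C + L * e + n * h <= L * (C + n))%nat.
    rewrite mulnDr; move: Hnn HC2 Hnh.
    move: (n * n) (L * e) (L * C) (n * h) (L * n) => P Y X Q0 Z; lia.
  set k := (L * (C + n) - (C + L * e))%nat.
  have Ek : (L * (C + n) = (C + L * e) + k)%nat by rewrite /k subnKC //; lia.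
  have Hkh : (h * n <= k)%nat by rewrite /k; lia.
  have B1 : 'C(n.+1, 2) = (C + n)%nat by rewrite binS bin1.
  rewrite B1 Ek in HC.
  have e1 : (2 ^ (C + n) = 2 ^ C * 2 ^ n)%R := pow_add _ _ _.
  have e2 : (rho ^ (C + L * e + k) = rho ^ C * rho ^ (L * e) * rho ^ k)%R.
    by rewrite -!pow_add.
  rewrite e1 e2 in HC.
  have P1 := pow_lt 2 C (ltac:(lra) : (0 < 2)%R).
  have P3 := pow_lt rho C rpos.
  have P4 := pow_lt rho (L * e) rpos.
  have P5 := pow_lt rho k rpos.
  have P6 := pow_lt 2 n (ltac:(lra) : (0 < 2)%R).
  have K1 : (1 <= 2 ^ n * rho ^ k)%R.
    set A := (2 ^ C * rho ^ C * rho ^ (L * e))%R.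
    have PA : (0 < A)%R by rewrite /A; apply: Rmult_lt_0_compat => //; apply: Rmult_lt_0_compat.
    have : (A <= A * (2 ^ n * rho ^ k))%R.
      have : (2 ^ C <= INR #|Col g [set: 'I_n]|)%R by lra.
      move=> h1.
      have h2 : (2 ^ C * (rho ^ C * rho ^ (L * e)) <= INR #|Col g [set: 'I_n]| * (rho ^ C * rho ^ (L * e)))%R.
        apply: Rmult_le_compat_r => //; apply: Rmult_le_pos; lra.
      rewrite /A; nra.
    move=> h1; apply: (Rmult_le_reg_l A) => //; lra.
  have K2 : (rho ^ k <= (rho ^ h) ^ n)%R.
    rewrite -pow_mult; apply: (pow_mono rpos rle1); exact: Hkh.
  have K3 : ((2 * rho ^ h) ^ n < 1)%R.
    have P7 := pow_lt rho h rpos.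
    have Hb : (0 <= 2 * rho ^ h < 1)%R by lra.
    case: (n) Hn => [|m] // _.
    rewrite -tech_pow_Rmult.
    have : ((2 * rho ^ h) ^ m <= 1)%R.
      rewrite -(pow1 m); apply: pow_incr; lra.
    nra.
  rewrite Rpow_mult_distr in K3.
  have := pow_lt (rho ^ h) n (ltac:(apply: pow_lt; lra)).
  nra.
Qed.
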